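(* Consider Setting B with the regular nodes running Algorithm 2 (any graph sequence, any $f$-total Byzantine behavior). For $k\in\mathbb N$ and $0\le r\le k$ let $\Omega^{(r)}[k]=\{a^r\hat x_s[k-r]:s\in\mathcal S\cap\mathcal R\}$. Suppose that at some $k\in\mathbb N_+$, $\tau_i[k]=m$ for some $i\in(\mathcal V\setminus\mathcal S)\cap\mathcal R$ and $m\in\mathbb N_+$ (necessarily $m\le k$). Then $$\hat x_i[k]\in\mathrm{Conv}\Big(\bigcup_{r=1}^{m}\Omega^{(r)}[k]\Big),$$ where $\mathrm{Conv}$ denotes the convex hull.
   Context: Setting B. Scalar system $x[k+1]=ax[k]$, $a\in\mathbb R$, monitored by nodes $\mathcal V=\{1,\dots,N\}$ with measurements $y_i[k]=c_ix[k]$, $c_i\in\mathbb R$. Source set $\mathcal S=\{i\in\mathcal V:c_i\neq0\}$. Time-varying directed graphs $\mathcal G[k]=(\mathcal V,\mathcal E[k])$, $\mathcal N_i[k]=\{l\ne i:(l,i)\in\mathcal E[k]\}$; the union graph over an interval has the union of the edge sets. An unknown set $\mathcal A\subseteq\mathcal V$ of adversarial nodes with $|\mathcal A|\le f$ ($f$-total model; $\mathcal A$ may intersect $\mathcal S$); $\mathcal R=\mathcal V\setminus\mathcal A$ are regular. Adversaries are Byzantine: at each time they may send arbitrary, possibly different values (of both estimate and freshness index) to different out-neighbors, or send nothing, and may collude. At each time $k$, each node $l$ sends to its out-neighbors a pair (estimate, freshness index); regular $l$ sends its true $(\hat x_l[k],\tau_l[k])$. Algorithm 2 (executed by regular nodes).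 Regular source $i\in\mathcal S$: $\tau_i[k]=0$ for all $k$ and $\hat x_i[k+1]=a\hat x_i[k]+l_i(y_i[k]-c_i\hat x_i[k])$ with observer gain $l_i$. Regular non-source $i$: keeps $\hat x_i[k]$ (arbitrary initial), $\tau_i[k]\in\mathbb N\cup\{\omega\}$ with $\tau_i[0]=\omega$, and a list $\mathcal M_i$ of distinct node labels (initially empty, at most $2f+1$ entries, stored in $2f+1$ slots) with, for each $l\in\mathcal M_i$, a stored estimate $v_{i,l}$, stored index $d_{i,l}\in\mathbb N$ and time stamp $\phi_{i,l}$. At time $k$ let $\mathcal J_i[k]$ be the set of $l\in\mathcal N_i[k]$ whose reported index $\tau_l[k]$ lies in $\mathbb N$ and satisfies $\tau_l[k]\le k$. ''Appending $l$ at time $k$'' means: put $l$ in $\mathcal M_i$ (if absent), set $v_{i,l}=\hat x_l[k]$, $d_{i,l}=\tau_l[k]$ (reported values), $\phi_{i,l}=k$. Filtering update (F) at time $k$ (requires $|\mathcal M_i|=2f+1$): set $\tau_i[k+1]=\max_{l\in\mathcal M_i}d_{i,l}+1$; form $\bar x_{i,l}[k]=a^{k-\phi_{i,l}}v_{i,l}$ for $l\in\mathcal M_i$; discard the $f$ largest and $f$ smallest of these $2f+1$ values, call the remaining one $\bar x_i[k]$, and set $\hat x_i[k+1]=a\bar x_i[k]$. Case $\tau_i[k]=\omega$: let $\mathcal J'=\mathcal J_i[k]\setminus\mathcal M_i$. If $|\mathcal M_i|+|\mathcal J'|<2f+1$, append every $l\in\mathcal J'$, set $\tau_i[k+1]=\omega$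 and $\hat x_i[k+1]=a\hat x_i[k]$. Otherwise append the $2f+1-|\mathcal M_i|$ nodes of $\mathcal J'$ with smallest reported indices (ties broken arbitrarily) and perform (F). Case $\tau_i[k]\ne\omega$: for each $l\in\mathcal J_i[k]\cap\mathcal M_i$ with reported $\tau_l[k]<d_{i,l}$, append $l$ (refreshing its entries); then rank the nodes of $\mathcal M_i\cup(\mathcal J_i[k]\setminus\mathcal M_i)$ by index ($d_{i,l}$ for $l\in\mathcal M_i$, reported $\tau_l[k]$ otherwise), keep the $2f+1$ with smallest index (ties arbitrary), appending newcomers and deleting dropped nodes (a retained node keeps its storage slot; a newcomer occupies the slot of a dropped node), and perform (F). In all cases, after the step every stored $d_{i,l}$ is incremented by $1$, and $\mathcal M_i$, $v$, $\phi$ carry over to time $k+1$. *)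

(* Defs.v *)
From HB Require Import structures.
From mathcomp Require Import all_boot all_order all_algebra.
Set Implicit Arguments. Unset Strict Implicit. Unset Printing Implicit Defensive.
Import Order.TTheory GRing.Theory Num.Theory.
Local Open Scope ring_scope.

Section Alg2.
Variables (R : realFieldType) (N : nat).

Definition in_conv (P : R -> Prop) (x : R) : Prop :=
  exists (n : nat) (w p : 'I_n -> R),
    (forall j, 0 <= w j) /\ \sum_j w j = 1 /\ (forall j, P (p j)) /\
    x = \sum_j w j * p j.

(* Freshness index: [None] encodes omega, [Some t] encodes t in N. *)
Definition fidx := option nat.

(* A message: [None] = nothing sent; [Some (estimate, index)]. *)
Definition message := option (R * fidx).

(* discard the f largest and f smallest of 2f+1 values: the remaining one *)
Definition trim (f : nat) (s : seq R) : R := nth 0 (sort <=%R s) f.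

Definition upd (T : Type) (S : {set 'I_N}) (new old : 'I_N -> T) : 'I_N -> T :=
  fun l => if l \in S then new l else old l.

Definition filt_ok (a : R) (f k : nat) (M' : {set 'I_N}) (v' : 'I_N -> R)
    (d' ph' : 'I_N -> nat) (tau1 : fidx) (xh1 : R) : Prop :=
  tau1 = Some (\max_(l in M') d' l).+1 /\
  xh1 = a * trim f [seq a ^+ (k - ph' l) * v' l | l <- enum M'].

Definition store_ok (M' : {set 'I_N}) (v' : 'I_N -> R) (d' ph' : 'I_N -> nat)
    (M1 : {set 'I_N}) (v1 : 'I_N -> R) (d1 ph1 : 'I_N -> nat) : Prop :=
  M1 = M' /\ forall l, l \in M' -> v1 l = v' l /\ d1 l = (d' l).+1 /\ ph1 l = ph' l.

(* One step of Algorithm 2 at a regular non-source node at time k.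
   [nb] = in-neighbour set N_i[k]; [msgs l] = message received from l. *)
Definition nonsource_step (a : R) (f k : nat) (nb : {set 'I_N})
    (msgs : 'I_N -> message)
    (tau0 : fidx) (M0 : {set 'I_N}) (v0 : 'I_N -> R) (d0 ph0 : 'I_N -> nat) (xh0 : R)
    (tau1 : fidx) (M1 : {set 'I_N}) (v1 : 'I_N -> R) (d1 ph1 : 'I_N -> nat) (xh1 : R)
    : Prop :=
  let rx := fun l => if msgs l is Some (z, _) then z else 0 in
  let rt := fun l => if msgs l is Some (_, Some t) then t else 0%N in
  let J := [set l in nb | if msgs l is Some (_, Some t) then (t <= k)%N else false] in
  let kk := fun _ : 'I_N => k in
  match tau0 with
  | None =>
      let J' := J :\: M0 in
      if (#|M0| + #|J'| < (2 * f).+1)%N then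
        store_ok (M0 :|: J') (upd J' rx v0) (upd J' rt d0) (upd J' kk ph0) M1 v1 d1 ph1
        /\ tau1 = None /\ xh1 = a * xh0
      else
        exists T : {set 'I_N},
          T \subset J' /\ #|T| = ((2 * f).+1 - #|M0|)%N /\
          (forall l l', l \in T -> l' \in J' :\: T -> (rt l <= rt l')%N) /\
          store_ok (M0 :|: T) (upd T rx v0) (upd T rt d0) (upd T kk ph0) M1 v1 d1 ph1 /\
          filt_ok a f k (M0 :|: T) (upd T rx v0) (upd T rt d0) (upd T kk ph0) tau1 xh1
  | Some _ =>
      let Rf := [set l in J :&: M0 | (rt l < d0 l)%N] in
      let v_ := upd Rf rx v0 in
      let d_ := upd Rf rt d0 in
      let ph_ := upd Rf kk ph0 in
      let idx := fun l => if l \in M0 then d_ l else rt l in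
      exists M' : {set 'I_N},
        M' \subset M0 :|: J /\ #|M'| = (2 * f).+1 /\
        (forall l l', l \in M' -> l' \in (M0 :|: J) :\: M' -> (idx l <= idx l')%N) /\
        let nw := M' :\: M0 in
        store_ok M' (upd nw rx v_) (upd nw rt d_) (upd nw kk ph_) M1 v1 d1 ph1 /\
        filt_ok a f k M' (upd nw rx v_) (upd nw rt d_) (upd nw kk ph_) tau1 xh1
  end.

(* An execution of Algorithm 2 in Setting B (any graph sequence E, any
   Byzantine behaviour of the nodes in A: their messages msg are unconstrained). *)
Definition alg2_exec (f : nat) (a : R) (c Lg : 'I_N -> R) (E : nat -> rel 'I_N)
    (A : {set 'I_N}) (x : nat -> R)
    (msg : nat -> 'I_N -> 'I_N -> message)
    (xh : 'I_N -> nat -> R) (tau : 'I_N -> nat -> fidx)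
    (M : 'I_N -> nat -> {set 'I_N}) (v : 'I_N -> nat -> 'I_N -> R)
    (d ph : 'I_N -> nat -> 'I_N -> nat) : Prop :=
  (forall k, x k.+1 = a * x k) /\
  (* regular sources: Luenberger observer, index constantly 0 *)
  (forall s, s \notin A -> c s != 0 ->
     forall k, tau s k = Some 0%N /\
       xh s k.+1 = a * xh s k + Lg s * (c s * x k - c s * xh s k)) /\
  (forall k l i, l \notin A -> l != i -> E k l i -> msg k l i = Some (xh l k, tau l k)) /\
  (forall i, i \notin A -> c i = 0 ->
     tau i 0%N = None /\ M i 0%N = set0 /\
     forall k, nonsource_step a f k [set l | (l != i) && E k l i] (fun l => msg k l i)
       (tau i k) (M i k) (v i k) (d i k) (ph i k) (xh i k)
       (tau i k.+1) (M i k.+1) (v i k.+1) (d i k.+1) (ph i k.+1) (xh i k.+1)).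

End Alg2.

(* Main.v *)
Require Import Defs.
From HB Require Import structures.
From mathcomp Require Import all_boot all_order all_algebra.
From mathcomp Require Import zify ring lra.
Set Implicit Arguments. Unset Strict Implicit. Unset Printing Implicit Defensive.
Import Order.TTheory GRing.Theory Num.Theory.
Local Open Scope ring_scope.

Section Gen.
Variable R : realFieldType.

Lemma conv_pt (P : R -> Prop) x : P x -> in_conv P x.
Proof.
move=> Px; exists 1%N, (fun _ => 1), (fun _ => x); split; first by move=> _; rewrite ler01.
by rewrite big_ord1; split=> //; split=> //; rewrite big_ord1 mul1r.
Qed.

Lemma conv_scale (P Q : R -> Prop) (b x : R) :
  (forall z, P z -> Q (b * z)) -> in_conv P x -> in_conv Q (b * x).
Proof.
move=> PQ [n [w [p [w0 [w1 [Pp ->]]]]]].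
exists n, w, (fun j => b * p j); split=> //; split=> //; split; first by move=> j; apply: PQ.
rewrite mulr_sumr; apply: eq_bigr => j _; ring.
Qed.

Lemma conv_mono (P Q : R -> Prop) x : (forall z, P z -> Q z) -> in_conv P x -> in_conv Q x.
Proof. by move=> PQ Hx; rewrite -[x]mul1r; apply: conv_scale Hx => z /PQ; rewrite mul1r. Qed.

Lemma conv_comb (P : R -> Prop) x y (l : R) : 0 <= l <= 1 ->
  in_conv P x -> in_conv P y -> in_conv P (l * x + (1 - l) * y).
Proof.
move=> /andP[l0 l1] [n1 [w1 [p1 [w10 [w11 [Pp1 ->]]]]]] [n2 [w2 [p2 [w20 [w21 [Pp2 ->]]]]]].
exists (n1 + n2)%N, (fun j => match split j with inl j1 => l * w1 j1 | inr j2 => (1 - l) * w2 j2 end),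
  (fun j => match split j with inl j1 => p1 j1 | inr j2 => p2 j2 end).
split; first by move=> j; case: (split j) => j'; apply: mulr_ge0 => //; rewrite subr_ge0.
split.
  rewrite big_split_ord /=.
  have E1 : forall j : 'I_n1, split (lshift n2 j) = inl j by move=> j; exact: (unsplitK (inl _)).
  have E2 : forall j : 'I_n2, split (rshift n1 j) = inr j by move=> j; exact: (unsplitK (inr _)).
  under eq_bigr do rewrite E1. under [X in _ + X = _]eq_bigr do rewrite E2.
  by rewrite -!mulr_sumr w11 w21; ring.
split; first by move=> j; case: (split j).
rewrite big_split_ord /=.
have E1 : forall j : 'I_n1, split (lshift n2 j) = inl j by move=> j; exact: (unsplitK (inl _)).
have E2 : forall j : 'I_n2, split (rshift n1 j) = inr j by move=> j; exact: (unsplitK (inr _)).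
under [X in _ = X + _]eq_bigr do rewrite E1. under [X in _ = _ + X]eq_bigr do rewrite E2.
rewrite !mulr_sumr; congr (_ + _); apply: eq_bigr => j _; ring.
Qed.

Lemma conv_between (P : R -> Prop) x y z : x <= z <= y ->
  in_conv P x -> in_conv P y -> in_conv P z.
Proof.
move=> /andP[xz zy] Hx Hy.
have [exy|nxy] := eqVneq x y.
  by subst y; have -> : z = x by apply/eqP; rewrite eq_le zy xz.
have yx : 0 < y - x by rewrite subr_gt0 lt_neqAle nxy (le_trans xz zy).
set l := (y - z) / (y - x).
have -> : z = l * x + (1 - l) * y by rewrite /l; field; rewrite gt_eqF.
apply: conv_comb => //; rewrite /l ler_pdivrMr // ler_pdivlMr // mul0r mul1r; apply/andP; split; lra.
Qed.


Lemma ltn_sub_add (n f j : nat) : (j < n - f)%N -> (f + j < n)%N.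
Proof. lia. Qed.

Lemma count_enum_set (T : finType) (S : {set T}) (q : pred T) :
  count q (enum S) = #|[set l in S | q l]|.
Proof. rewrite cardE /enum_mem size_filter count_filter. apply: eq_count => l /=. by rewrite !inE andbC. Qed.

Lemma trim_between (T : finType) (S B : {set T}) (val : T -> R) (f : nat) :
  ((2 * f).+1 <= #|S|)%N -> (#|B| <= f)%N ->
  exists l1 l2, [/\ l1 \in S, l1 \notin B, l2 \in S, l2 \notin B &
     val l1 <= trim f [seq val l | l <- enum S] <= val l2].
Proof.
move=> hS hB.
set s := [seq val l | l <- enum S].
set ss := sort <=%R s.
have sz : size ss = #|S| by rewrite size_sort size_map cardE.
have srt : sorted <=%R ss by apply: sort_sorted; exact: le_total.
set t := trim f s.
have tE : t = nth 0 ss f by [].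
have hle := sorted_leq_nth (@le_trans _ R) (@lexx _ R) 0 srt.
have fs : (f < size ss)%N by rewrite sz; lia.
have c1 : (f.+1 <= count (fun z : R => (z <= t)%R) s)%N.
  rewrite -(permP (permEl (perm_sort <=%R s))) -/ss -(cat_take_drop f.+1 ss) count_cat.
  apply: leq_trans (leq_addr _ _).
  have -> : count (fun z : R => (z <= t)%R) (take f.+1 ss) = size (take f.+1 ss).
    apply/eqP; rewrite -all_count; apply/(all_nthP 0) => j.
    rewrite size_takel // => hj.
    rewrite nth_take // tE; apply: hle; rewrite ?inE; lia.
  by rewrite size_takel.
have c2 : (f.+1 <= count (fun z : R => (t <= z)%R) s)%N.
  rewrite -(permP (permEl (perm_sort <=%R s))) -/ss -(cat_take_drop f ss) count_cat.
  apply: leq_trans (leq_addl _ _).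
  have -> : count (fun z : R => (t <= z)%R) (drop f ss) = size (drop f ss).
    apply/eqP; rewrite -all_count; apply/(all_nthP 0) => j.
    rewrite size_drop => hj; rewrite nth_drop tE.
    apply: hle; rewrite ?inE; [exact: fs| exact: (ltn_sub_add hj) | exact: leq_addr].
  by rewrite size_drop; lia.
rewrite /s count_map count_enum_set in c1.
rewrite /s count_map count_enum_set in c2.
have ex1 : exists l, [/\ l \in S, l \notin B & val l <= t].
  have : ~~ ([set l in S | (val l <= t)%R] \subset B).
    apply/negP => /subset_leq_card h; have := leq_trans c1 (leq_trans h hB); by rewrite ltnn.
  case/subsetPn => l; rewrite inE => /andP[lS lt] lB; by exists l.
have ex2 : exists l, [/\ l \in S, l \notin B & t <= val l].
  have : ~~ ([set l in S | (t <= val l)%R] \subset B).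
    apply/negP => /subset_leq_card h; have := leq_trans c2 (leq_trans h hB); by rewrite ltnn.
  case/subsetPn => l; rewrite inE => /andP[lS lt] lB; by exists l.
case: ex1 => l1 [? ? ?]; case: ex2 => l2 [? ? ?]; exists l1, l2; split=> //.
by apply/andP; split.
Qed.

End Gen.

Section Main.
Variables (R : realFieldType) (N f : nat) (a : R) (c Lg : 'I_N -> R)
    (E : nat -> rel 'I_N) (A : {set 'I_N}) (x : nat -> R)
    (msg : nat -> 'I_N -> 'I_N -> message R)
    (xh : 'I_N -> nat -> R) (tau : 'I_N -> nat -> fidx)
    (M : 'I_N -> nat -> {set 'I_N}) (v : 'I_N -> nat -> 'I_N -> R)
    (d ph : 'I_N -> nat -> 'I_N -> nat).
Hypothesis hA : (#|A| <= f)%N.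
Hypothesis hex : alg2_exec f a c Lg E A x msg xh tau M v d ph.

Definition Pset k lo hi (z : R) := exists (r : nat) (s : 'I_N),
  [/\ (lo <= r <= hi)%N, s \notin A, c s != 0 & z = a ^+ r * xh s (k - r)%N].

Definition G t (Mx : {set 'I_N}) (vx : 'I_N -> R) (dx phx : 'I_N -> nat) : Prop :=
  forall l, l \in Mx -> l \notin A -> (phx l <= t)%N /\
    exists to, tau l (phx l) = Some to /\ vx l = xh l (phx l) /\ dx l = (to + (t - phx l))%N.

Lemma G_upd t Mx vx dx phx (S : {set 'I_N}) (rx : 'I_N -> R) (rt : 'I_N -> nat) :
  G t Mx vx dx phx ->
  (forall l, l \in S -> l \notin A -> rx l = xh l t /\ tau l t = Some (rt l)) ->
  G t (Mx :|: S) (upd S rx vx) (upd S rt dx) (upd S (fun _ => t) phx).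
Proof.
move=> hG hS l; rewrite inE /upd => /orP[lM|lS] lA.
  case: ifP => lS; last exact: hG.
  case: (hS l lS lA) => -> ->; split=> //; exists (rt l); split=> //; split=> //; lia.
rewrite lS; case: (hS l lS lA) => -> ->; split=> //; exists (rt l); split=> //; split=> //; lia.
Qed.

Lemma G_sub t (M1 M2 : {set 'I_N}) vx dx phx : G t M1 vx dx phx -> M2 \subset M1 -> G t M2 vx dx phx.
Proof. by move=> hG /subsetP sub l /sub; apply: hG. Qed.

Lemma store_G t M' v' d' ph' M1 v1 d1 ph1 :
  G t M' v' d' ph' -> store_ok M' v' d' ph' M1 v1 d1 ph1 -> G t.+1 M1 v1 d1 ph1.
Proof.
move=> hG [-> hs] l lM lA; case: (hs l lM) => -> [-> ->].
case: (hG l lM lA) => le [to [h1 [h2 h3]]]; split; first lia.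
exists to; split=> //; split=> //; rewrite h3; lia.
Qed.

Lemma Jgood i t : forall l,
  l \in [set l in [set l | (l != i) && E t l i] |
         if msg t l i is Some (_, Some t') then (t' <= t)%N else false] ->
  l \notin A ->
  (if msg t l i is Some (z, _) then z else 0) = xh l t /\
  tau l t = Some (if msg t l i is Some (_, Some t') then t' else 0%N).
Proof.
case: hex => _ [_ [hmsg _]] l; rewrite !inE => /andP[/andP[li El] hm] lA.
rewrite (hmsg t l i lA li El) in hm *; split=> //.
by case: (tau l t) hm.
Qed.


Lemma mem_sepI (T : finType) (J M0 : {set T}) (P : pred T) l :
  l \in [set l in J :&: M0 | P l] -> l \in J.
Proof. by rewrite !inE => /andP[/andP[]]. Qed.

Lemma mem_nw (T : finType) (J M0 M' : {set T}) l :
  M' \subset M0 :|: J -> l \in M' :\: M0 -> l \in J.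
Proof. move=> /subsetP sub; rewrite inE => /andP[lM /sub]; by rewrite inE (negbTE lM). Qed.

Lemma mem_D (T : finType) (J M0 S : {set T}) l : S \subset J :\: M0 -> l \in S -> l \in J.
Proof. by move=> /subsetP sub /sub; rewrite inE => /andP[]. Qed.

Lemma sub_M' (T : finType) (M0 Rf M' : {set T}) : M' \subset (M0 :|: Rf) :|: (M' :\: M0).
Proof. apply/subsetP => l lM; rewrite !inE lM; case: (l \in M0) => /=; rewrite ?orbT; done. Qed.

Lemma inv i : i \notin A -> c i = 0 -> forall t, G t (M i t) (v i t) (d i t) (ph i t).
Proof.
move=> iA ci; case: hex => _ [_ [_ hns]]; case: (hns i iA ci) => _ [M0 hstep].
elim=> [|t IH]; first by rewrite M0 => l; rewrite inE.
move: (hstep t); rewrite /nonsource_step.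
case: (tau i t) => [t0|] /=.
  case=> M' [sub [_ [_ [Hst _]]]].
  apply: (store_G _ Hst); apply: (@G_sub t (M i t :|: _ :|: (M' :\: M i t))); last exact: sub_M'.
  apply: G_upd; last by move=> l /(mem_nw sub) lJ lA; apply: Jgood.
  apply: G_upd; first exact: IH.
  by move=> l /mem_sepI lJ lA; apply: Jgood.
case: ifP => _.
  case=> Hst _; apply: (store_G _ Hst); apply: G_upd; first exact: IH.
  by move=> l lS lA; apply: Jgood lA; exact: (mem_D (subxx _) lS).
case=> T [TJ [_ [_ [Hst _]]]]; apply: (store_G _ Hst); apply: G_upd; first exact: IH.
by move=> l /(mem_D TJ) lJ lA; apply: Jgood.
Qed.


Lemma card_disj (T : finType) (M0 T' J : {set T}) n :
  T' \subset J :\: M0 -> #|T'| = (n - #|M0|)%N -> (n <= #|M0 :|: T'|)%N.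
Proof.
move=> /subsetP sub hc.
have e : M0 :&: T' = set0.
  apply/setP => l; rewrite !inE; case lT: (l \in T'); last by rewrite andbF.
  by have := sub l lT; rewrite inE => /andP[/negbTE ->].
have := cardsUI M0 T'; rewrite e cards0; lia.
Qed.

Lemma filt t M' v' d' ph' tau1 xh1 mm :
  (forall l phi to, l \notin A -> (phi <= t)%N -> tau l phi = Some to ->
     in_conv (Pset phi 0 to) (xh l phi)) ->
  G t M' v' d' ph' -> ((2 * f).+1 <= #|M'|)%N ->
  filt_ok a f t M' v' d' ph' tau1 xh1 -> tau1 = Some mm -> in_conv (Pset t.+1 1 mm) xh1.
Proof.
move=> H hG hM [-> ->] [<-].
set m := (\max_(l in M') d' l).+1.
have key : forall l, l \in M' -> l \notin A ->
    in_conv (Pset t.+1 1 m) (a * (a ^+ (t - ph' l) * v' l)).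
  move=> l lM lA; case: (hG l lM lA) => le [to [h1 [h2 h3]]].
  have hmax : (d' l <= \max_(l in M') d' l)%N := leq_bigmax_cond _ lM.
  rewrite h2 mulrA -exprS -subSn //.
  apply: conv_scale (H l _ to lA le h1) => z [r [s [/andP[_ hr] sA cs ->]]].
  exists ((t.+1 - ph' l) + r)%N, s; split=> //.
  - apply/andP; split; rewrite /m; lia.
  - rewrite exprD -mulrA; congr (_ * (_ * xh s _)); lia.
have [l1 [l2 [l1M l1A l2M l2A /andP[h1 h2]]]] :=
  @trim_between _ _ M' A (fun l => a ^+ (t - ph' l) * v' l) f hM hA.
have [a0|a0] := leP 0 a.
  apply: conv_between (key _ l1M l1A) (key _ l2M l2A); apply/andP; split; rewrite ler_wpM2l //.
apply: conv_between (key _ l2M l2A) (key _ l1M l1A); apply/andP; split; rewrite ler_wnM2l //; exact: ltW.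
Qed.


Lemma main_all : forall k j, (j <= k)%N -> forall i m, i \notin A -> c i = 0 ->
  tau i j = Some m -> in_conv (Pset j 1 m) (xh i j).
Proof.
have hex' := hex; case: hex' => _ [hsrc [_ hns]].
elim=> [|k IH] j hj i m iA ci.
  have -> : j = 0%N by lia.
  by case: (hns i iA ci) => -> _.
case: (leqP j k) => hjk; first exact: IH.
have -> : j = k.+1 by lia.
have H : forall l phi to, l \notin A -> (phi <= k)%N -> tau l phi = Some to ->
    in_conv (Pset phi 0 to) (xh l phi).
  move=> l phi to lA hp ht; case: (eqVneq (c l) 0) => cl.
    by apply: conv_mono (IH phi hp l to lA cl ht) => z [r [s [/andP[_ hr] ? ? ?]]];
       exists r, s; split=> //; apply/andP.
  case: (hsrc l lA cl phi) => ht0 _; rewrite ht0 in ht; case: ht => <-.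
  apply: conv_pt; exists 0%N, l; split=> //; by rewrite expr0 mul1r subn0.
have Gk := @inv i iA ci k.
case: (hns i iA ci) => _ [_ hstep].
move: (hstep k); rewrite /nonsource_step.
case: (tau i k) => [t0|] /=.
  case=> M' [sub [card [_ [Hst Hf]]]].
  apply: filt H _ _ Hf; last by rewrite card.
  apply: (@G_sub k (M i k :|: _ :|: (M' :\: M i k))); last exact: sub_M'.
  apply: G_upd; last by move=> l /(mem_nw sub) lJ lA; apply: Jgood.
  apply: G_upd; first exact: Gk.
  by move=> l /mem_sepI lJ lA; apply: Jgood.
case: ifP => _.
  by case=> _ [-> _].
case=> T [TJ [Tc [_ [Hst Hf]]]].
apply: filt H _ _ Hf; last exact: (card_disj TJ Tc).
apply: G_upd; first exact: Gk.
by move=> l /(mem_D TJ) lJ lA; apply: Jgood.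
Qed.

End Main.

Theorem lemma7 (R : realFieldType) (N f : nat) (a : R) (c Lg : 'I_N -> R)
    (E : nat -> rel 'I_N) (A : {set 'I_N}) (x : nat -> R)
    (msg : nat -> 'I_N -> 'I_N -> message R)
    (xh : 'I_N -> nat -> R) (tau : 'I_N -> nat -> fidx)
    (M : 'I_N -> nat -> {set 'I_N}) (v : 'I_N -> nat -> 'I_N -> R)
    (d ph : 'I_N -> nat -> 'I_N -> nat) :
  (#|A| <= f)%N ->
  alg2_exec f a c Lg E A x msg xh tau M v d ph ->
  forall (k : nat) (i : 'I_N) (m : nat),
    (0 < k)%N -> i \notin A -> c i = 0 -> (0 < m)%N -> tau i k = Some m ->
    in_conv (fun z : R => exists (r : nat) (s : 'I_N),
               [/\ (1 <= r <= m)%N, s \notin A, c s != 0 &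
                   z = a ^+ r * xh s (k - r)%N])
            (xh i k).
Proof.
move=> hA hex k i m _ iA ci _ ht.
exact: (main_all hA hex (leqnn k) iA ci ht).
Qed.
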